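(* If $D$ is a diagram of a link $L$, then $\ker\phi_\tau$ is the $\Lambda$-submodule of $M_A^{red}(L)$ generated by the elements $(t-1)\cdot((\gamma_D(a)-\gamma_D(a'))\otimes1)$ with $a,a'\in A(D)$.
   Context: Let $L=K_1\cup\dots\cup K_\mu$ be an oriented classical link with diagram $D$. $A(D)$ is the set of arcs of $D$ and $C(D)$ the set of crossings; $\kappa_D:A(D)\to\{1,\dots,\mu\}$ sends an arc to the index of its component. At a crossing $c$, $a_1$ is the overpassing arc, $a_2$ the underpassing arc on the right of $a_1$ (with respect to the orientation of $a_1$), $a_3$ the underpassing arc on the left of $a_1$. $\Lambda_\mu=\mathbb Z[t_1^{\pm1},\dots,t_\mu^{\pm1}]$, $\Lambda=\mathbb Z[t^{\pm1}]$, $\tau:\Lambda_\mu\to\Lambda$ the ring homomorphism with $\tau(t_i)=t$, making $\Lambda$ a $\Lambda_\mu$-module; $I_\mu$ is the augmentation ideal of $\Lambda_\mu$. $\rho_D:\Lambda_\mu^{C(D)}\to\Lambda_\mu^{A(D)}$ is the $\Lambda_\mu$-linear map with $\rho_D(c)=(1-t_{\kappa_D(a_2)})a_1+t_{\kappa_D(a_1)}a_2-a_3$; $M_A(L)=\operatorname{coker}\rho_D$ with quotient map $\gamma_D$; $\phi_L:M_A(L)\to I_\mu$ is the $\Lambda_\mu$-linear map with $\phi_L(\gamma_D(a))=t_{\kappa_D(a)}-1$. $M_A^{red}(L)=M_A(L)\otimes_{\Lambda_\mu}\Lambda$ and $\phi_\tau=\phi_L\otimes\mathrm{id}_\Lambda:M_A^{red}(L)\to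 I_\mu\otimes_{\Lambda_\mu}\Lambda$. *)

(* Defs.v *)
From HB Require Import structures.
From mathcomp Require Import all_boot all_order all_algebra.
Set Implicit Arguments. Unset Strict Implicit. Unset Printing Implicit Defensive.
Import Order.TTheory GRing.Theory Num.Theory.
Local Open Scope ring_scope.

(*   over c = a_1, under_r c = a_2 (right of a_1), under_l c = a_3.    *)
Definition under_adj (Arc Crossing : finType)
  (under_r under_l : Crossing -> Arc) : rel Arc :=
  fun a b => [exists c, ((under_r c == a) && (under_l c == b))
                     || ((under_l c == a) && (under_r c == b))].

Record link_diagram (mu : nat) := LinkDiagram {
  Arc : finType;
  Crossing : finType;
  kappa : Arc -> 'I_mu;
  over : Crossing -> Arc;
  under_r : Crossing -> Arc;
  under_l : Crossing -> Arc;
  under_same_comp : forall c, kappa (under_r c) = kappa (under_l c);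
  comp_nonempty : forall i : 'I_mu, exists a, kappa a = i;
  comp_connected : forall a b, kappa a = kappa b ->
    connect (under_adj under_r under_l) a b
}.

(* Polynomial rings Z[t_0,...,t_{n-1}] as iterated univariate ones.    *)
Fixpoint mpoly (n : nat) : idomainType :=
  match n with
  | 0 => int
  | n'.+1 => {poly (mpoly n')}
  end.

Fixpoint tv (n : nat) (i : nat) : mpoly n :=
  match n return mpoly n with
  | 0 => 0
  | n'.+1 => if i == n' then 'X else (tv n' i)%:P
  end.

Fixpoint evalm (R : comNzRingType) (v : nat -> R) (n : nat) : mpoly n -> R :=
  match n return mpoly n -> R with
  | 0 => fun p => p%:~R
  | n'.+1 => fun p => (map_poly (@evalm R v n') p).[v n']
  end.

Definition aug (mu : nat) (p : mpoly mu) : int := evalm (fun _ => 1) p.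
Definition tau_poly (mu : nat) (p : mpoly mu) : {poly int} := evalm (fun _ => 'X) p.

(* Lambda_mu = Z[t_1^{+-1},...,t_mu^{+-1}] realised as the subring of  *)
(* the fraction field of Z[t_1..t_mu] of elements p / (t_1...t_mu)^k.  *)
Definition FF (mu : nat) := {fraction (mpoly mu)}.
Definition tofr (mu : nat) (p : mpoly mu) : FF mu := @FracField.tofrac (mpoly mu) p.
Definition tF (mu : nat) (i : 'I_mu) : FF mu := tofr (tv mu i).
Definition monoF (mu : nat) : FF mu := tofr (\prod_(i < mu) tv mu i).

Definition in_Lambda (mu : nat) (x : FF mu) : Prop :=
  exists (p : mpoly mu) (k : nat), x * monoF mu ^+ k = tofr p.

Definition in_I (mu : nat) (x : FF mu) : Prop :=
  exists (p : mpoly mu) (k : nat), x * monoF mu ^+ k = tofr p /\ aug p = 0.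

Definition in_kertau (mu : nat) (x : FF mu) : Prop :=
  exists (p : mpoly mu) (k : nat), x * monoF mu ^+ k = tofr p /\ tau_poly p = 0.

Definition in_kertau_I (mu : nat) (x : FF mu) : Prop :=
  exists (N : nat) (j f : 'I_N -> FF mu),
    (forall l, in_kertau (j l) /\ in_I (f l)) /\ x = \sum_(l < N) j l * f l.

Definition rho (mu : nat) (D : link_diagram mu) (c : Crossing D)
  (a : Arc D) : FF mu :=
  (1 - tF (kappa (under_r c))) * ((a == over c)%:R)
  + tF (kappa (over c)) * ((a == under_r c)%:R)
  - ((a == under_l c)%:R).

Definition phi (mu : nat) (D : link_diagram mu) (x : Arc D -> FF mu) : FF mu :=
  \sum_(a : Arc D) x a * (tF (kappa a) - 1).

(* Main.v *)
Require Import Defs.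
From HB Require Import structures.
From mathcomp Require Import all_boot all_order all_algebra.
From mathcomp Require Import ring.
Import Order.TTheory GRing.Theory Num.Theory.
Local Open Scope ring_scope.
Set Implicit Arguments. Unset Strict Implicit.

Fixpoint evrm (R : comNzRingType) (v : nat -> R) (n : nat) : {rmorphism mpoly n -> R} :=
  match n return {rmorphism mpoly n -> R} with
  | 0 => (intr : {rmorphism int -> R})
  | n'.+1 => (horner_morph (fun x => mulrC (v n') (evrm v n' x)) : {rmorphism {poly mpoly n'} -> R})
  end.

Lemma evalmE (R : comNzRingType) (v : nat -> R) n (p : mpoly n) : evalm v p = evrm v n p.
Proof.
elim: n p => [//|n IH] p /=.
rewrite /horner_morph; congr (_.[_]); apply: eq_map_poly => x; exact: IH.
Qed.

Lemma evrm_tv (R : comNzRingType) (v : nat -> R) n i : (i < n)%N -> evrm v n (tv n i) = v i.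
Proof.
elim: n => [//|n IH] /= lt.
case: eqP => [->|ne]; first by rewrite horner_morphX.
rewrite horner_morphC IH //. by move: lt; rewrite ltnS leq_eqVlt => /orP[/eqP//|].
Qed.

Lemma evrm_comp (R S : comNzRingType) (g : {rmorphism R -> S}) (v : nat -> R) n (p : mpoly n) :
  g (evrm v n p) = evrm (fun k => g (v k)) n p.
Proof.
elim: n p => [|n IH] p /=; first by rewrite rmorph_int.
rewrite /horner_morph -horner_map /=; congr (_.[_]).
rewrite -map_poly_comp; apply: eq_map_poly => x /=; exact: IH.
Qed.

Lemma evrm_ext (R : comNzRingType) (v w : nat -> R) n (p : mpoly n) :
  (forall k, (k < n)%N -> v k = w k) -> evrm v n p = evrm w n p.
Proof.
elim: n p => [//|n IH] p /= H.
rewrite /horner_morph H //; congr (_.[_]); apply: eq_map_poly => x; apply: IH => k lt.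
by apply: H; apply: ltnW.
Qed.

Definition liftp n (q : {poly int}) : mpoly n := evrm (fun _ => tv n 0) 1 q.

Lemma evrm_X1 (q : {poly int}) : evrm (fun _ => 'X : {poly int}) 1 q = q.
Proof.
rewrite /= /horner_morph.
have -> : map_poly (evrm (fun _ => 'X : {poly int}) 0) q = q^:P.
  apply: eq_map_poly => c /=. by rewrite -[in RHS](intz c) (rmorph_int polyC).
exact: comp_polyXr.
Qed.

Lemma tau_liftp n (q : {poly int}) : (0 < n)%N -> tau_poly (liftp n q) = q.
Proof.
move=> n0; rewrite /tau_poly evalmE /liftp evrm_comp.
rewrite (@evrm_ext _ _ (fun _ => 'X)) ?evrm_X1 // => k _.
by rewrite -evalmE evalmE evrm_tv.
Qed.


Section FFlevel.
Variable mu : nat.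
Local Notation FF := (FF mu).
Local Notation m := (monoF mu).
Definition Mp : mpoly mu := \prod_(i < mu) tv mu i.

Lemma tofrD (p q : mpoly mu) : tofr (p + q) = tofr p + tofr q.
Proof. exact: rmorphD. Qed.
Lemma tofrB (p q : mpoly mu) : tofr (p - q) = tofr p - tofr q.
Proof. exact: rmorphB. Qed.
Lemma tofrM (p q : mpoly mu) : tofr (p * q) = tofr p * tofr q.
Proof. exact: rmorphM. Qed.
Lemma tofrX (p : mpoly mu) k : tofr (p ^+ k) = tofr p ^+ k.
Proof. exact: rmorphXn. Qed.
Lemma tofr1 : tofr (1 : mpoly mu) = 1.
Proof. exact: rmorph1. Qed.
Lemma tofr0 : tofr (0 : mpoly mu) = 0.
Proof. exact: rmorph0. Qed.
Lemma tofrN (p : mpoly mu) : tofr (- p) = - tofr p.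
Proof. exact: rmorphN. Qed.
Lemma tofr_sum I (r : seq I) (P : pred I) (F : I -> mpoly mu) :
  tofr (\sum_(i <- r | P i) F i) = \sum_(i <- r | P i) tofr (F i).
Proof. exact: rmorph_sum. Qed.
Lemma tofr_inj (p q : mpoly mu) : tofr p = tofr q -> p = q.
Proof. by move=> /eqP; rewrite /tofr tofrac_eq => /eqP. Qed.
Lemma monoFE : m = tofr Mp. Proof. by []. Qed.

Lemma tau_tv i : (i < mu)%N -> tau_poly (tv mu i) = 'X.
Proof. by move=> lt; rewrite /tau_poly evalmE evrm_tv. Qed.
Lemma tau_Mp : tau_poly Mp = 'X ^+ mu.
Proof.
rewrite /tau_poly evalmE rmorph_prod.
rewrite (eq_bigr (fun _ => 'X)) ?prodr_const ?card_ord // => i _.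
by rewrite evrm_tv.
Qed.
Lemma Mp_neq0 : Mp != 0.
Proof.
apply/negP => /eqP H; have := tau_Mp; rewrite H /tau_poly evalmE rmorph0 => /eqP.
by rewrite eq_sym expf_eq0 polyX_eq0 andbF.
Qed.
Lemma m_neq0 : m != 0.
Proof. by rewrite monoFE /tofr tofrac_eq0 Mp_neq0. Qed.

Lemma aug_tau (p : mpoly mu) : aug p = (tau_poly p).[1].
Proof.
rewrite /aug /tau_poly !evalmE.
have := evrm_comp (horner_eval (1:int)) (fun _ => 'X) p. rewrite /= horner_evalE => ->.
by apply: evrm_ext => k _; rewrite horner_evalE hornerX.
Qed.
Lemma tauD (p q : mpoly mu) : tau_poly (p + q) = tau_poly p + tau_poly q.
Proof. by rewrite /tau_poly !evalmE rmorphD. Qed.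
Lemma tauB (p q : mpoly mu) : tau_poly (p - q) = tau_poly p - tau_poly q.
Proof. by rewrite /tau_poly !evalmE rmorphB. Qed.
Lemma tauM (p q : mpoly mu) : tau_poly (p * q) = tau_poly p * tau_poly q.
Proof. by rewrite /tau_poly !evalmE rmorphM. Qed.
Lemma tauX (p : mpoly mu) k : tau_poly (p ^+ k) = tau_poly p ^+ k.
Proof. by rewrite /tau_poly !evalmE rmorphXn. Qed.
Lemma tau1 : tau_poly (1 : mpoly mu) = 1.
Proof. by rewrite /tau_poly !evalmE rmorph1. Qed.
Lemma tau0 : tau_poly (0 : mpoly mu) = 0.
Proof. by rewrite /tau_poly !evalmE rmorph0. Qed.
Lemma tau_sum I (r : seq I) (P : pred I) (F : I -> mpoly mu) :
  tau_poly (\sum_(i <- r | P i) F i) = \sum_(i <- r | P i) tau_poly (F i).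
Proof. rewrite /tau_poly evalmE rmorph_sum; apply: eq_bigr => i _; by rewrite evalmE. Qed.

Lemma augM (p q : mpoly mu) : aug (p * q) = aug p * aug q.
Proof. by rewrite !aug_tau tauM hornerM. Qed.
Lemma augB (p q : mpoly mu) : aug (p - q) = aug p - aug q.
Proof. by rewrite !aug_tau tauB hornerD hornerN. Qed.
Lemma aug_tv i : (i < mu)%N -> aug (tv mu i) = 1.
Proof. by move=> lt; rewrite aug_tau tau_tv // hornerX. Qed.
Lemma aug1 : aug (1 : mpoly mu) = 1.
Proof. by rewrite aug_tau tau1 hornerC. Qed.

Lemma rep_up (x : FF) (p : mpoly mu) k d : x * m ^+ k = tofr p -> x * m ^+ (k + d) = tofr (p * Mp ^+ d).
Proof. by move=> H; rewrite exprD mulrA H tofrM tofrX. Qed.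

Lemma rep_ge (x : FF) (p : mpoly mu) k K : (k <= K)%N -> x * m ^+ k = tofr p ->
  x * m ^+ K = tofr (p * Mp ^+ (K - k)).
Proof. by move=> le H; rewrite -(rep_up _ H) subnKC. Qed.

Lemma inL_tofr (p : mpoly mu) : in_Lambda (tofr p).
Proof. by exists p, 0%N; rewrite expr0 mulr1. Qed.
Lemma inL0 : in_Lambda (0 : FF).
Proof. by rewrite -tofr0; apply: inL_tofr. Qed.
Lemma inL1 : in_Lambda (1 : FF).
Proof. by rewrite -tofr1; apply: inL_tofr. Qed.
Lemma inL_tF (i : 'I_mu) : in_Lambda (tF i).
Proof. exact: inL_tofr. Qed.
Lemma inLD (x y : FF) : in_Lambda x -> in_Lambda y -> in_Lambda (x + y).
Proof.
move=> [p [k Hp]] [q [l Hq]]; exists (p * Mp ^+ l + q * Mp ^+ k), (k + l)%N.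
by rewrite mulrDl (rep_up _ Hp) addnC (rep_up _ Hq) tofrD.
Qed.
Lemma inLN (x : FF) : in_Lambda x -> in_Lambda (- x).
Proof. by move=> [p [k Hp]]; exists (- p), k; rewrite mulNr Hp tofrN. Qed.
Lemma inLB (x y : FF) : in_Lambda x -> in_Lambda y -> in_Lambda (x - y).
Proof. by move=> ? ?; apply: inLD => //; apply: inLN. Qed.
Lemma inLM (x y : FF) : in_Lambda x -> in_Lambda y -> in_Lambda (x * y).
Proof.
move=> [p [k Hp]] [q [l Hq]]; exists (p * q), (k + l)%N.
by rewrite exprD mulrACA Hp Hq tofrM.
Qed.
Lemma inL_nat n : in_Lambda (n%:R : FF).
Proof. elim: n => [|n IH]; first exact: inL0. by rewrite mulrS; apply: inLD => //; apply: inL1. Qed.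
Lemma inL_sum I (r : seq I) (P : pred I) (F : I -> FF) :
  (forall i, P i -> in_Lambda (F i)) -> in_Lambda (\sum_(i <- r | P i) F i).
Proof.
move=> H; elim/big_rec: _ => [|i x Pi Hx]; first exact: inL0.
by apply: inLD => //; apply: H.
Qed.

Lemma inJ_inL (x : FF) : in_kertau x -> in_Lambda x.
Proof. by move=> [p [k [H _]]]; exists p, k. Qed.
Lemma inJ0 : in_kertau (0 : FF).
Proof. by exists 0, 0%N; rewrite mul0r tofr0 tau0. Qed.
Lemma inJD (x y : FF) : in_kertau x -> in_kertau y -> in_kertau (x + y).
Proof.
move=> [p [k [Hp tp]]] [q [l [Hq tq]]]; exists (p * Mp ^+ l + q * Mp ^+ k), (k + l)%N.
by rewrite mulrDl (rep_up _ Hp) addnC (rep_up _ Hq) tofrD tauD !tauM tp tq !mul0r addr0.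
Qed.
Lemma inJM (x y : FF) : in_kertau x -> in_Lambda y -> in_kertau (x * y).
Proof.
move=> [p [k [Hp tp]]] [q [l Hq]]; exists (p * q), (k + l)%N.
by rewrite exprD mulrACA Hp Hq tofrM tauM tp mul0r.
Qed.
Lemma inJMl (x y : FF) : in_Lambda y -> in_kertau x -> in_kertau (y * x).
Proof. by move=> ? ?; rewrite mulrC; apply: inJM. Qed.
Lemma inJN (x : FF) : in_kertau x -> in_kertau (- x).
Proof. by move=> H; rewrite -mulrN1; apply: inJM => //; apply: inLN; apply: inL1. Qed.
Lemma inJ_sum I (r : seq I) (P : pred I) (F : I -> FF) :
  (forall i, P i -> in_kertau (F i)) -> in_kertau (\sum_(i <- r | P i) F i).
Proof.
move=> H; elim/big_rec: _ => [|i x Pi Hx]; first exact: inJ0.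
by apply: inJD => //; apply: H.
Qed.
Lemma inJ_tF (i k : 'I_mu) : in_kertau (tF i - tF k).
Proof.
exists (tv mu i - tv mu k), 0%N; rewrite expr0 mulr1 tofrB tauB !tau_tv ?subrr //.
Qed.

Lemma inI_mul (x : FF) (i : 'I_mu) : in_Lambda x -> in_I (x * (tF i - 1)).
Proof.
move=> [p [k Hp]]; exists (p * (tv mu i - 1)), k; split.
  by rewrite mulrAC Hp tofrM tofrB tofr1.
by rewrite augM augB aug1 aug_tv // subrr mulr0.
Qed.

Lemma inJI0 : in_kertau_I (0 : FF).
Proof. exists 0%N, (fun _ => 0), (fun _ => 0); split; [by case | by rewrite big_ord0]. Qed.
Lemma inJI_prod (x y : FF) : in_kertau x -> in_I y -> in_kertau_I (x * y).
Proof. by move=> Hx Hy; exists 1%N, (fun _ => x), (fun _ => y); rewrite big_ord1. Qed.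
Lemma inJID (x y : FF) : in_kertau_I x -> in_kertau_I y -> in_kertau_I (x + y).
Proof.
move=> [N [j [f [H1 ->]]]] [N' [j' [f' [H2 ->]]]].
exists (N + N')%N, (fun l => match split l with inl a => j a | inr b => j' b end),
  (fun l => match split l with inl a => f a | inr b => f' b end); split.
  by move=> l; case: split.
rewrite big_split_ord /=.
congr (_ + _); apply: eq_bigr => l _.
  by have := unsplitK (inl l : 'I_N + 'I_N'); rewrite /= => ->.
by have := unsplitK (inr l : 'I_N + 'I_N'); rewrite /= => ->.
Qed.
Lemma inJI_sum I (r : seq I) (P : pred I) (F : I -> FF) :
  (forall i, P i -> in_kertau_I (F i)) -> in_kertau_I (\sum_(i <- r | P i) F i).
Proof.
move=> H; elim/big_rec: _ => [|i x Pi Hx]; first exact: inJI0.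
by apply: inJID => //; apply: H.
Qed.
End FFlevel.


Lemma sum_ind (R : nzRingType) (I : finType) (i0 : I) (F : I -> R) :
  \sum_i (i == i0)%:R * F i = F i0.
Proof.
rewrite (bigD1 i0) //= eqxx mul1r big1 ?addr0 // => i /negbTE ->; exact: mul0r.
Qed.
Lemma sum_indr (R : nzRingType) (I : finType) (i0 : I) (F : I -> R) :
  \sum_i F i * (i == i0)%:R = F i0.
Proof.
rewrite (bigD1 i0) //= eqxx mulr1 big1 ?addr0 // => i /negbTE ->; exact: mulr0.
Qed.

Section Tlevel.
Variable mu : nat.
Variable D : link_diagram mu.
Local Notation FF := (FF mu).

Definition body (r : Crossing D -> FF) (j : Arc D -> FF) (s : 'I_mu -> Arc D -> Arc D -> FF) a :=
  \sum_(c : Crossing D) r c * rho c a + j a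
  + \sum_(i < mu) \sum_(b : Arc D) \sum_(b' : Arc D)
      s i b b' * (tF i - 1) * ((a == b)%:R - (a == b')%:R).

Definition inT (x : Arc D -> FF) :=
  exists (r : Crossing D -> FF) (j : Arc D -> FF) (s : 'I_mu -> Arc D -> Arc D -> FF),
     [/\ forall c, in_Lambda (r c),
         forall a, in_kertau (j a),
         forall i b b', in_Lambda (s i b b') &
         forall a, x a = body r j s a].

Lemma inT0 : inT (fun _ => 0).
Proof.
exists (fun _ => 0), (fun _ => 0), (fun _ _ _ => 0); split => //.
- by move=> _; apply: inL0.
- by move=> _; apply: inJ0.
- by move=> *; apply: inL0.
move=> a; rewrite /body !big1 ?addr0 // => *; rewrite ?big1 // => *; rewrite ?big1 // => *;
  by rewrite !mul0r.
Qed.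

Lemma inTD x y : inT x -> inT y -> inT (fun a => x a + y a).
Proof.
move=> [r1 [j1 [s1 [Hr1 Hj1 Hs1 Hx]]]] [r2 [j2 [s2 [Hr2 Hj2 Hs2 Hy]]]].
exists (fun c => r1 c + r2 c), (fun a => j1 a + j2 a), (fun i b b' => s1 i b b' + s2 i b b').
split => [c|a|i b b'|a]; first by apply: inLD.
- by apply: inJD.
- by apply: inLD.
rewrite Hx Hy /body.
have -> : \sum_(c : Crossing D) (r1 c + r2 c) * rho c a =
  \sum_(c : Crossing D) r1 c * rho c a + \sum_(c : Crossing D) r2 c * rho c a.
  by rewrite -big_split; apply: eq_bigr => c _; rewrite mulrDl.
have -> : \sum_(i < mu) \sum_(b : Arc D) \sum_(b' : Arc D)
      (s1 i b b' + s2 i b b') * (tF i - 1) * ((a == b)%:R - (a == b')%:R) =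
  \sum_(i < mu) \sum_(b : Arc D) \sum_(b' : Arc D)
      s1 i b b' * (tF i - 1) * ((a == b)%:R - (a == b')%:R) +
  \sum_(i < mu) \sum_(b : Arc D) \sum_(b' : Arc D)
      s2 i b b' * (tF i - 1) * ((a == b)%:R - (a == b')%:R).
  rewrite -big_split; apply: eq_bigr => i _; rewrite -big_split; apply: eq_bigr => b _.
  by rewrite -big_split; apply: eq_bigr => b' _; rewrite !mulrDl.
ring.
Qed.

Lemma inTM (l : FF) x : in_Lambda l -> inT x -> inT (fun a => l * x a).
Proof.
move=> Hl [r1 [j1 [s1 [Hr1 Hj1 Hs1 Hx]]]].
exists (fun c => l * r1 c), (fun a => l * j1 a), (fun i b b' => l * s1 i b b').
split => [c|a|i b b'|a]; first by apply: inLM.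
- by apply: inJMl.
- by apply: inLM.
rewrite Hx /body !mulrDr !mulr_sumr; congr (_ + _ + _).
- by apply: eq_bigr => c _; rewrite mulrA.
apply: eq_bigr => i _; rewrite mulr_sumr; apply: eq_bigr => b _.
by rewrite mulr_sumr; apply: eq_bigr => b' _; rewrite !mulrA.
Qed.

Lemma inT_ext x y : (forall a, x a = y a) -> inT x -> inT y.
Proof.
move=> E [r [j [s [H1 H2 H3 H4]]]]; exists r, j, s; split => // a; by rewrite -E.
Qed.

Lemma inT_sum I (rr : seq I) (P : pred I) (F : I -> Arc D -> FF) :
  (forall i, P i -> inT (F i)) -> inT (fun a => \sum_(i <- rr | P i) F i a).
Proof.
move=> H; elim: rr => [|i rr IH].
  by apply: inT_ext inT0 => a; rewrite big_nil.
case Pi: (P i).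
  apply: inT_ext (inTD (H i Pi) IH) => a; by rewrite big_cons Pi.
by apply: inT_ext IH => a; rewrite big_cons Pi.
Qed.

Definition dl (b : Arc D) : Arc D -> FF := fun a => (a == b)%:R.

Lemma inT_s (l : FF) (i : 'I_mu) b b' : in_Lambda l ->
  inT (fun a => l * (tF i - 1) * (dl b a - dl b' a)).
Proof.
move=> Hl.
exists (fun _ => 0), (fun _ => 0),
  (fun i' c c' => (i' == i)%:R * ((c == b)%:R * ((c' == b')%:R * l))).
split => [c|a|i' c c'|a]; first by apply: inL0.
- exact: inJ0.
- by do 3 (apply: inLM; first exact: inL_nat).
rewrite /body big1 ?add0r ?addr0 => [|c _]; last by rewrite mul0r.
under eq_bigr => i' _ do under eq_bigr => c _ do under eq_bigr => c' _ do rewrite -!mulrA.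
under eq_bigr => i' _ do under eq_bigr => c _ do rewrite -!mulr_sumr sum_ind.
under eq_bigr => i' _ do rewrite -!mulr_sumr sum_ind.
by rewrite sum_ind !mulrA.
Qed.

Lemma inT_j (j0 : FF) b : in_kertau j0 -> inT (fun a => j0 * dl b a).
Proof.
move=> Hj.
exists (fun _ => 0), (fun a => j0 * dl b a), (fun _ _ _ => 0).
split => [c|a|i' c c'|a]; first by apply: inL0.
- by apply: inJM => //; apply: inL_nat.
- exact: inL0.
rewrite /body big1 ?add0r => [|c _]; last by rewrite mul0r.
rewrite big1 ?addr0 // => i _; rewrite big1 // => c _; rewrite big1 // => c' _.
by rewrite !mul0r.
Qed.

Lemma inT_r (l : FF) c : in_Lambda l -> inT (fun a => l * rho c a).
Proof.
move=> Hl.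
exists (fun c' => (c' == c)%:R * l), (fun _ => 0), (fun _ _ _ => 0).
split => [c'|a|i' c' c''|a]; first by apply: inLM => //; apply: inL_nat.
- exact: inJ0.
- exact: inL0.
rewrite /body addr0 [X in _ = _ + X]big1 ?addr0 => [|i _]; last first.
  rewrite big1 // => c' _; rewrite big1 // => c'' _; by rewrite !mul0r.
under eq_bigr => c' _ do rewrite -mulrA.
by rewrite sum_ind.
Qed.

Lemma inT_cross c : inT (fun a => dl (under_r c) a - dl (under_l c) a).
Proof.
set a1 := Defs.over c; set a2 := under_r c; set a3 := under_l c.
set k1 := kappa (Defs.over c); set k2 := kappa (under_r c).
have H := inTD (inTD (@inT_r 1 c (@inL1 mu)) (@inT_s 1 k2 a1 a2 (@inL1 mu)))
   (@inT_j (tF k2 - tF k1) a2 (inJ_tF _ _)).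
apply: inT_ext H => a /=.
rewrite /rho /dl -/a1 -/a2 -/a3 -/k1 -/k2; ring.
Qed.

Lemma inTN x : inT x -> inT (fun a => - x a).
Proof.
move=> H; apply: inT_ext (inTM (inLN (@inL1 mu)) H) => a; by rewrite mulN1r.
Qed.

Lemma inT_conn b b' : kappa b = kappa b' -> inT (fun a => dl b a - dl b' a).
Proof.
move=> /(comp_connected) /connectP [p].
elim: p b => [|c p IH] b /=.
  move=> _ ->; by apply: inT_ext inT0 => a; rewrite subrr.
move=> /andP [Hbc Hp] Hl.
have Hbc' : inT (fun a => dl b a - dl c a).
  move: Hbc; rewrite /under_adj => /existsP [c0 /orP [/andP [/eqP E1 /eqP E2]|/andP [/eqP E1 /eqP E2]]].
    by rewrite -E1 -E2; apply: inT_cross.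
  apply: inT_ext (inTN (inT_cross c0)) => a; rewrite -E1 -E2 /=; ring.
apply: inT_ext (inTD Hbc' (IH c Hp Hl)) => a /=; ring.
Qed.
End Tlevel.


Section Phi.
Variable mu : nat.
Variable D : link_diagram mu.
Local Notation FF := (FF mu).

Lemma phi_ext (x y : Arc D -> FF) : (forall a, x a = y a) -> phi x = phi y.
Proof. by move=> E; apply: eq_bigr => a _; rewrite E. Qed.
Lemma phiD (x y : Arc D -> FF) : phi (fun a => x a + y a) = phi x + phi y.
Proof. by rewrite /phi -big_split; apply: eq_bigr => a _; rewrite mulrDl. Qed.
Lemma phiM (l : FF) (x : Arc D -> FF) : phi (fun a => l * x a) = l * phi x.
Proof. by rewrite /phi mulr_sumr; apply: eq_bigr => a _; rewrite mulrA. Qed.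
Lemma phi_sum I (rr : seq I) (P : pred I) (F : I -> Arc D -> FF) :
  phi (fun a => \sum_(i <- rr | P i) F i a) = \sum_(i <- rr | P i) phi (F i).
Proof.
rewrite /phi; under eq_bigr => a _ do rewrite mulr_suml.
exact: exchange_big.
Qed.
Lemma phi_dl (b : Arc D) : phi (dl b) = tF (kappa b) - 1.
Proof. by rewrite /phi /dl sum_ind. Qed.
Lemma phi_rho (c : Crossing D) : phi (rho c) = 0.
Proof.
rewrite (@phi_ext _ (fun a => (fun a => (1 - tF (kappa (under_r c))) * dl (Defs.over c) a
   + tF (kappa (Defs.over c)) * dl (under_r c) a) a + (-1) * dl (under_l c) a)); last first.
  by move=> a; rewrite /rho /dl mulN1r.
rewrite phiD phiD !phiM !phi_dl (under_same_comp c); ring.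
Qed.

Lemma backward (x : Arc D -> FF) r j s :
  (forall c, in_Lambda (r c)) -> (forall a, in_kertau (j a)) ->
  (forall i b b', in_Lambda (s i b b')) -> (forall a, x a = body r j s a) ->
  in_kertau_I (phi x).
Proof.
move=> Hr Hj Hs Hx; rewrite (phi_ext Hx) /body !phiD.
apply: inJID; first apply: inJID.
- rewrite phi_sum big1 => [|c _]; [exact: inJI0 | by rewrite phiM phi_rho mulr0].
- rewrite /phi; apply: inJI_sum => a _; rewrite -[_ - 1]mul1r.
  by apply: inJI_prod => //; apply: inI_mul; apply: inL1.
rewrite phi_sum; apply: inJI_sum => i _; rewrite phi_sum; apply: inJI_sum => b _.
rewrite phi_sum; apply: inJI_sum => b' _.
rewrite phiM.
have -> : phi (fun a => (a == b)%:R - (a == b')%:R) = tF (kappa b) - tF (kappa b').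
  rewrite (@phi_ext _ (fun a => dl b a + (-1) * dl b' a)); last by move=> a; rewrite /dl mulN1r.
  rewrite phiD phiM !phi_dl; ring.
rewrite mulrC; apply: inJI_prod; first exact: inJ_tF.
exact: inI_mul.
Qed.
End Phi.


Section Core.
Variable mu : nat.

Definition psi (i : nat) : {rmorphism mpoly mu -> {poly int}} :=
  evrm (fun k => if k == i then 'X else 1 : {poly int}) mu.

Lemma psi_tv i k : (k < mu)%N -> psi i (tv mu k) = if k == i then 'X else 1.
Proof. by move=> lt; rewrite /psi evrm_tv. Qed.

Lemma psi_Mp (i : 'I_mu) : psi i (Mp mu) = 'X.
Proof.
rewrite /Mp rmorph_prod (bigD1 i) //= psi_tv // eqxx big1 ?mulr1 // => k ne.
rewrite psi_tv //; case: eqP => // /val_inj E; by rewrite E eqxx in ne.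
Qed.

Lemma psi_aug i (p : mpoly mu) : (psi i p).[1] = aug p.
Proof.
rewrite /aug evalmE /psi.
have := evrm_comp (horner_eval (1:int)) (fun k => if k == i then 'X else 1 : {poly int}) p.
rewrite /= horner_evalE => ->.
by apply: evrm_ext => k _; rewrite horner_evalE; case: (k == i); rewrite ?hornerX ?hornerC.
Qed.

Lemma aug_sum I (r : seq I) (P : pred I) (F : I -> mpoly mu) :
  aug (\sum_(i <- r | P i) F i) = \sum_(i <- r | P i) aug (F i).
Proof. rewrite !aug_tau tau_sum horner_sum; apply: eq_bigr => i _; by rewrite aug_tau. Qed.

Lemma root1_fact (p : {poly int}) : p.[1] = 0 -> exists q, p = q * ('X - 1).
Proof. by move=> H; apply/factor_theorem; apply/rootP; rewrite H. Qed.

Lemma Xsub1_neq0 : ('X - 1 : {poly int}) != 0.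
Proof. by rewrite -polyC1 polyXsubC_eq0. Qed.

Variable D : link_diagram mu.

Lemma poly_core (X : Arc D -> mpoly mu) E (N : nat) (P Q : 'I_N -> mpoly mu) (e : 'I_N -> nat) :
   (forall l, tau_poly (P l) = 0) -> (forall l, aug (Q l) = 0) ->
   \sum_a X a * (tv mu (kappa a) - 1) * Mp mu ^+ E = \sum_l P l * Q l * Mp mu ^+ e l ->
   \sum_a tau_poly (X a) = 0 /\ forall i : 'I_mu, \sum_(a | kappa a == i) aug (X a) = 0.
Proof.
move=> HP HQ Heq; split.
  have := congr1 (@tau_poly mu) Heq.
  rewrite !tau_sum [X in _ = X -> _]big1 => [|l _]; last by rewrite !tauM HP !mul0r.
  under eq_bigr => a _ do rewrite !tauM tauB tau1 tau_tv // tauX tau_Mp.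
  have nz : ('X^mu ^+ E : {poly int}) != 0 by rewrite !expf_neq0 ?polyX_eq0.
  rewrite -!mulr_suml => /eqP; rewrite mulf_eq0 (negbTE nz) orbF mulf_eq0 (negbTE Xsub1_neq0) orbF.
  by move/eqP.
move=> i; have := congr1 (psi i) Heq.
rewrite !rmorph_sum /=.
have [q Hq] : exists q, \sum_l psi i (P l * Q l * Mp mu ^+ e l) = q * ('X - 1) ^+ 2.
  apply: (big_ind (fun p => exists q, p = q * ('X - 1) ^+ 2)).
  - by exists 0; rewrite mul0r.
  - by move=> p1 p2 [q1 ->] [q2 ->]; exists (q1 + q2); rewrite mulrDl.
  move=> l _; rewrite !rmorphM.
  have r1 : (psi i (P l)).[1] = 0 by rewrite psi_aug aug_tau HP horner0.
  have r2 : (psi i (Q l)).[1] = 0 by rewrite psi_aug HQ.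
  have [a1 Ha1] := root1_fact r1.
  have [a2 Ha2] := root1_fact r2.
  exists (a1 * a2 * psi i (Mp mu ^+ e l)); rewrite Ha1 Ha2; ring.
rewrite Hq.
under eq_bigr => a _ do rewrite !rmorphM rmorphB rmorph1 psi_tv // rmorphXn psi_Mp.
have -> : \sum_a psi i (X a) * ((if nat_of_ord (kappa a) == nat_of_ord i then 'X else 1) - 1) * 'X ^+ E
   = (\sum_(a | kappa a == i) psi i (X a)) * ('X ^+ E) * ('X - 1).
  rewrite !mulr_suml [in RHS]big_mkcond /=; apply: eq_bigr => a _.
  case: eqP => [/val_inj -> | ne]; rewrite ?eqxx; first ring.
  by case: eqP => [E'|_]; [exfalso; apply: ne; rewrite E' | rewrite subrr mulr0 !mul0r].
rewrite expr2 mulrA => /(mulIf Xsub1_neq0) /(congr1 (fun p => p.[1])).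
rewrite !hornerE horner_sum expr1n mulr1 => H; rewrite -[RHS]H.
by apply: eq_bigr => a _; rewrite psi_aug.
Qed.
End Core.


Lemma liftpX mu : liftp mu 'X = tv mu 0.
Proof. by have := @evrm_tv _ (fun _ => tv mu 0) 1 0 isT. Qed.

Lemma liftp_XB mu (q : {poly int}) : liftp mu (q * ('X - 1)) = liftp mu q * (tv mu 0 - 1).
Proof. by rewrite /liftp rmorphM rmorphB rmorph1 -/(liftp mu 'X) liftpX. Qed.

Lemma tFE mu (i : 'I_mu) : tofr (tv mu i) = tF i.
Proof. by []. Qed.

Section Forward.
Variable mu : nat.
Variable D : link_diagram mu.
Hypothesis mu0 : (0 < mu)%N.
Local Notation FF := (FF mu).
Local Notation m := (monoF mu).

Lemma forward (x : Arc D -> FF) : (forall a, in_Lambda (x a)) -> in_kertau_I (phi x) -> inT x.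
Proof.
move=> Hx [N [j [f [Hjf Hsum]]]].
pose i0 : 'I_mu := Ordinal mu0.
have [PK HPK] : exists PK : Arc D -> mpoly mu * nat,
    forall a, x a * m ^+ (PK a).2 = tofr (PK a).1.
  apply: (@fin_all_exists _ _ (fun a (pk : mpoly mu * nat) => x a * m ^+ pk.2 = tofr pk.1)) => a.
  have [p [k H]] := Hx a; by exists (p, k).
pose c := \big[maxn/0%N]_a (PK a).2.
pose X := fun a => (PK a).1 * Mp mu ^+ (c - (PK a).2).
have HX : forall a, x a * m ^+ c = tofr (X a).
  by move=> a; apply: rep_ge (HPK a); apply: leq_bigmax.
clearbody X.
have [PJ HPJ] : exists PJ : 'I_N -> (mpoly mu * nat) * (mpoly mu * nat),
    forall l, [/\ j l * m ^+ (PJ l).1.2 = tofr (PJ l).1.1, tau_poly (PJ l).1.1 = 0,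
       f l * m ^+ (PJ l).2.2 = tofr (PJ l).2.1 & aug (PJ l).2.1 = 0].
  apply: (@fin_all_exists _ _ (fun l (pp : (mpoly mu * nat) * (mpoly mu * nat)) =>
    [/\ j l * m ^+ pp.1.2 = tofr pp.1.1, tau_poly pp.1.1 = 0,
       f l * m ^+ pp.2.2 = tofr pp.2.1 & aug pp.2.1 = 0])) => l.
  have [[p [k [H1 H2]]] [q [k' [H3 H4]]]] := Hjf l.
  by exists ((p, k), (q, k')).
pose E := \big[maxn/0%N]_l ((PJ l).1.2 + (PJ l).2.2)%N.
have hle : forall l, ((PJ l).1.2 + (PJ l).2.2 <= c + E)%N.
  move=> l; apply: (@leq_trans E); last exact: leq_addl.
  by rewrite /E; apply: (@leq_bigmax _ (fun l => ((PJ l).1.2 + (PJ l).2.2)%N) l).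
clearbody c E.
have Key : \sum_a X a * (tv mu (kappa a) - 1) * Mp mu ^+ E =
    \sum_l (PJ l).1.1 * (PJ l).2.1 * Mp mu ^+ (c + E - ((PJ l).1.2 + (PJ l).2.2)).
  apply: tofr_inj; rewrite !tofr_sum.
  transitivity (phi x * m ^+ (c + E)).
    rewrite /phi mulr_suml; elim/big_rec2: _ => [//|a y1 y2 _ ->]; congr (_ + _).
    rewrite !tofrM tofrB tofr1 !tofrX -monoFE tFE -HX exprD.
    ring.
  rewrite Hsum mulr_suml; elim/big_rec2: _ => [//|l y1 y2 _ ->]; congr (_ + _).
  have [h1 h2 h3 h4] := HPJ l.
  rewrite !tofrM tofrX -monoFE -h1 -h3.
  rewrite -{1}(subnKC (hle l)) !exprD.
  set k1 := (PJ l).1.2; set k2 := (PJ l).2.2; set k3 := (c + E - (k1 + k2))%N.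
  clearbody k1 k2 k3; ring.
have [Htau Haug] := poly_core (P := fun l => (PJ l).1.1) (Q := fun l => (PJ l).2.1)
   (fun l => let: And4 _ h _ _ := HPJ l in h) (fun l => let: And4 _ _ _ h := HPJ l in h) Key.
have [rep Hrep] := fin_all_exists (@comp_nonempty _ D).
pose Y := fun i : 'I_mu => \sum_(a | kappa a == i) X a.
have [Q HQ] : exists Q : 'I_mu -> {poly int}, forall i, tau_poly (Y i) = Q i * ('X - 1).
  apply: (@fin_all_exists _ _ (fun i (q : {poly int}) => tau_poly (Y i) = q * ('X - 1))) => i.
  apply: root1_fact; by rewrite -aug_tau aug_sum Haug.
have sumQ : \sum_i Q i = 0.
  have : \sum_i tau_poly (Y i) = 0.
    rewrite -[RHS]Htau (partition_big (fun a => kappa a) xpredT) //=.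
    by apply: eq_bigr => i _; rewrite tau_sum.
  under eq_bigr do rewrite HQ.
  by rewrite -mulr_suml => /eqP; rewrite mulf_eq0 (negbTE Xsub1_neq0) orbF => /eqP.
pose y := fun i : 'I_mu => \sum_(a | kappa a == i) x a.
have hy : forall i, y i * m ^+ c = tofr (Y i).
  by move=> i; rewrite mulr_suml tofr_sum; apply: eq_bigr => a _; exact: HX.
have mcnz : m ^+ c != 0 by rewrite expf_neq0 // m_neq0.
pose jj := fun i => tofr (Y i - liftp mu (tau_poly (Y i))) / m ^+ c.
pose z := fun i => tofr (liftp mu (Q i)) / m ^+ c.
have Hjj : forall i, in_kertau (jj i).
  move=> i; exists (Y i - liftp mu (tau_poly (Y i))), c; split; first by rewrite divfK.
  by rewrite tauB tau_liftp // subrr.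
have Hz : forall i, in_Lambda (z i).
  by move=> i; exists (liftp mu (Q i)), c; rewrite divfK.
have Hyjz : forall i, y i = jj i + (tF i0 - 1) * z i.
  move=> i; apply: (mulIf mcnz); rewrite hy mulrDl /jj /z divfK // -mulrA divfK //.
  rewrite HQ liftp_XB tofrB tofrM tofrB tofr1.
  change (tofr (tv mu 0)) with (tF i0); ring.
have sumz : in_kertau (\sum_i z i).
  exists (\sum_i liftp mu (Q i)), c; split.
    by rewrite mulr_suml tofr_sum; apply: eq_bigr => i _; rewrite divfK.
  by rewrite tau_sum; under eq_bigr do rewrite tau_liftp //; exact: sumQ.
pose T1 := fun a => \sum_b x b * (dl b a - dl (rep (kappa b)) a).
pose T2 := fun a => \sum_i jj i * dl (rep i) a.
pose T3 := fun a => \sum_i z i * (tF i0 - 1) * (dl (rep i) a - dl (rep i0) a).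
pose T4 := fun a => ((tF i0 - 1) * \sum_i z i) * dl (rep i0) a.
have H1 : inT T1.
  apply: inT_sum => b _; apply: inTM (Hx b) _; apply: inT_conn; by rewrite Hrep.
have H2 : inT T2 by apply: inT_sum => i _; apply: inT_j.
have H3 : inT T3 by apply: inT_sum => i _; apply: inT_s.
have H4 : inT T4.
  apply: inT_j; apply: inJMl sumz; apply: inLB; [exact: inL_tF | exact: inL1].
apply: inT_ext (inTD (inTD (inTD H1 H2) H3) H4) => a /=.
have ex : x a = \sum_b x b * dl b a.
  by rewrite /dl; under eq_bigr do rewrite eq_sym; rewrite sum_indr.
have e1 : T1 a = \sum_b x b * dl b a - \sum_b x b * dl (rep (kappa b)) a.
  by rewrite /T1 -sumrB; apply: eq_bigr => b _; rewrite mulrBr.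
have e2 : \sum_b x b * dl (rep (kappa b)) a = \sum_i y i * dl (rep i) a.
  rewrite (partition_big (fun b => kappa b) xpredT) //=; apply: eq_bigr => i _.
  rewrite /y mulr_suml; apply: eq_bigr => b /eqP ->; done.
have e3 : T3 a + T4 a = \sum_i (tF i0 - 1) * z i * dl (rep i) a.
  rewrite /T3 /T4 mulr_sumr mulr_suml -big_split; apply: eq_bigr => i _ /=; ring.
have e4 : \sum_i y i * dl (rep i) a = T2 a + (T3 a + T4 a).
  rewrite e3 /T2 -big_split; apply: eq_bigr => i _ /=; rewrite Hyjz; ring.
rewrite e1 e2 e4 -ex; ring.
Qed.
End Forward.


Unset Implicit Arguments.

Theorem proposition8 (mu : nat) (D : link_diagram mu) (x : Arc D -> FF mu) :
  (forall a, in_Lambda (x a)) ->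
  (in_kertau_I (phi x) <->
   exists (r : Crossing D -> FF mu) (j : Arc D -> FF mu)
          (s : 'I_mu -> Arc D -> Arc D -> FF mu),
     [/\ forall c, in_Lambda (r c),
         forall a, in_kertau (j a),
         forall i b b', in_Lambda (s i b b') &
         forall a, x a = \sum_(c : Crossing D) r c * rho c a + j a
                       + \sum_(i < mu) \sum_(b : Arc D) \sum_(b' : Arc D)
                           s i b b' * (tF i - 1)
                             * ((a == b)%:R - (a == b')%:R)]).
Proof.
move=> Hx; split.
  move=> H; have [mu0|mupos] := posnP mu.
    have : inT x.
      apply: (@inT_ext mu D (fun _ => 0) x); last exact: inT0.
      move=> a; exfalso; have := ltn_ord (kappa a); move: (nat_of_ord (kappa a)) => k; by rewrite mu0.
    by [].
  exact: (forward mupos Hx H).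
move=> [r [j [s [Hr Hj Hs Hx']]]]; exact: backward Hr Hj Hs Hx'.
Qed.
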